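(* Let $d\geq 1$ and $n>d$ be integers, and let $\mathcal C(n,d)=\operatorname{conv}\{\mu_d(1),\dots,\mu_d(n)\}$ be the cyclic polytope, where $\mu_d(t)=(t,t^2,\dots,t^d)$. Let $\Delta$ and $\Delta'$ be two triangulations of (the vertex set of) $\mathcal C(n,d)$ which differ by a flip $[\Delta\rightsquigarrow\Delta']$. Then \[ \Delta\leq_1\Delta' \iff \begin{cases} \mathrm{gkz}_\Delta>_{\mathrm{lex}}\mathrm{gkz}_{\Delta'} & \text{if } d \text{ is even},\\ \mathrm{gkz}_\Delta<_{\mathrm{lex}}\mathrm{gkz}_{\Delta'} & \text{if } d \text{ is odd}.\end{cases} \]
   Context: A triangulation of a finite point configuration $P\subset\mathbb R^d$ is a subdivision of $\operatorname{conv}(P)$ into $d$-simplices whose vertices are points of $P$. A circuit is a minimally affinely dependent subset of $P$; for the vertex set of $\mathcal C(n,d)$ every circuit consists of $d+2$ vertices $\mu_d(t_1),\dots,\mu_d(t_{d+2})$ ($t_1<\dots<t_{d+2}$) and is combinatorially a cyclic polytope $\mathcal C(d+2,d)$, which has exactly two triangulations. These are obtained by projecting (forgetting the last coordinate) the lower facets, resp. the upper facets, of the $(d+1)$-simplex $\operatorname{conv}\{\mu_{d+1}(t_1),\dots,\mu_{d+1}(t_{d+2})\}$; they are called the lower and the upper triangulation of the circuit. Two triangulations $\Delta,\Delta'$ differ by a flip if they agree outside some circuit $C$ and, restricted to $C$, one of them is the lower and the other the upper triangulation of $C$. The flip $[\Delta\rightsquigarrow\Delta']$ is an up-flip if $\Delta$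 restricts to the lower and $\Delta'$ to the upper triangulation of $C$; then one writes $\Delta\leq_1\Delta'$. (The first higher Stasheff–Tamari order $\mathrm{HST}_1(n,d)$ is the reflexive–transitive closure of this relation.) For a triangulation $\Delta$ of the vertex set $\{\mu_d(1),\dots,\mu_d(n)\}$, its GKZ-vector is $\mathrm{gkz}_\Delta=(\mathrm{gkz}_\Delta(\mu_d(1)),\dots,\mathrm{gkz}_\Delta(\mu_d(n)))\in\mathbb R^n$ (vertices in the natural order along the moment curve), where $\mathrm{gkz}_\Delta(p)$ is the sum of the normalized volumes ($d!$ times Euclidean volume) of the simplices of $\Delta$ having $p$ as a vertex. $>_{\mathrm{lex}}$, $<_{\mathrm{lex}}$ denote the lexicographic order on $\mathbb R^n$. *)

(* Defs.v *)
From HB Require Import structures.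
From mathcomp Require Import all_boot all_order all_algebra.
From mathcomp Require Import reals.
Set Implicit Arguments. Unset Strict Implicit. Unset Printing Implicit Defensive.
Import Order.TTheory GRing.Theory Num.Theory.
Local Open Scope ring_scope.

Section Cyclic.
Variable R : realType.

Definition mu (d : nat) (t : R) : 'rV[R]_d := \row_(j < d) t ^+ j.+1.

(* the i-th point (i : 'I_n, 0-based) of C(n,d) is mu_d(i+1) *)
Definition pt (d n : nat) (i : 'I_n) : 'rV[R]_d := mu d (i.+1)%:R.

Variables d n : nat.

Definition in_conv (S : {set 'I_n}) (x : 'rV[R]_d) : Prop :=
  exists lam : 'I_n -> R,
    [/\ forall i, 0 <= lam i,
        forall i, i \notin S -> lam i = 0,
        \sum_i lam i = 1 &
        x = \sum_i lam i *: pt d i].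

Definition aff_dep (S : {set 'I_n}) : Prop :=
  exists lam : 'I_n -> R,
    [/\ forall i, i \notin S -> lam i = 0,
        \sum_i lam i = 0,
        \sum_i lam i *: pt d i = 0 &
        exists i, lam i != 0].

Definition circuit (C : {set 'I_n}) : Prop :=
  aff_dep C /\ forall S : {set 'I_n}, S \proper C -> ~ aff_dep S.

(* triangulation of the point configuration {pt i}: a set of d-simplices
   (affinely independent (d+1)-subsets) covering conv(P) and intersecting
   properly (conv s :&: conv t = conv (s :&: t)). *)
Definition triangulation (T : {set {set 'I_n}}) : Prop :=
  [/\ forall s, s \in T -> #|s| = d.+1 /\ ~ aff_dep s,
      forall x, in_conv setT x -> exists2 s, s \in T & in_conv s x &
      forall s t x, s \in T -> t \in T -> in_conv s x -> in_conv t x ->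
        in_conv (s :&: t) x].

Definition lpt (i : 'I_n) : 'rV[R]_d.+1 := mu d.+1 (i.+1)%:R.

Definition dotr (m : nat) (u v : 'rV[R]_m) : R := \sum_k u 0 k * v 0 k.

(* F is a lower (resp. upper) facet of the (d+1)-simplex conv{lpt i | i in C}:
   a supporting hyperplane {w.x = b} contains exactly the points of F, the
   remaining vertices lie strictly on the side of the inner normal w, and
   w has positive (resp. negative) last coordinate. *)
Definition lower_facet (C F : {set 'I_n}) : Prop :=
  [/\ F \subset C, #|F| = d.+1 &
   exists (w : 'rV[R]_d.+1) (b : R),
     [/\ 0 < w 0 ord_max,
         forall i, i \in F -> dotr w (lpt i) = b &
         forall i, i \in C :\: F -> b < dotr w (lpt i)]].

Definition upper_facet (C F : {set 'I_n}) : Prop :=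
  [/\ F \subset C, #|F| = d.+1 &
   exists (w : 'rV[R]_d.+1) (b : R),
     [/\ w 0 ord_max < 0,
         forall i, i \in F -> dotr w (lpt i) = b &
         forall i, i \in C :\: F -> b < dotr w (lpt i)]].

(* up-flip D ~> D' on the circuit C: D restricts to the lower triangulation
   of C, D' to the upper one, and they agree outside C. *)
Definition up_flip_on (C : {set 'I_n}) (D D' : {set {set 'I_n}}) : Prop :=
  [/\ circuit C,
      forall s : {set 'I_n}, s \subset C -> (s \in D <-> lower_facet C s),
      forall s : {set 'I_n}, s \subset C -> (s \in D' <-> upper_facet C s) &
      forall s : {set 'I_n}, ~~ (s \subset C) -> (s \in D) = (s \in D')].

Definition up_flip (D D' : {set {set 'I_n}}) : Prop :=
  exists C, up_flip_on C D D'.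

Definition differ_by_flip (D D' : {set {set 'I_n}}) : Prop :=
  up_flip D D' \/ up_flip D' D.

(* normalized volume (d! * Euclidean volume) of the simplex with vertex
   set s (#|s| = d+1): |det| of the (d+1)x(d+1) matrix with rows (1, pt i). *)
Definition nvol (s : {set 'I_n}) : R :=
  let rows := [seq pt d i | i <- enum s] in
  `| \det (\matrix_(k < d.+1, l < d.+1)
            match unlift ord0 l with
            | Some l' => (nth 0 rows k) 0 l'
            | None => 1
            end) |.

Definition gkz (T : {set {set 'I_n}}) (i : 'I_n) : R :=
  \sum_(s in T | i \in s) nvol s.

Definition lexlt (a b : 'I_n -> R) : Prop :=
  exists i : 'I_n, (forall j : 'I_n, (j < i)%N -> a j = b j) /\ a i < b i.

End Cyclic.

(* Main.v *)
Require Import Defs.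
From HB Require Import structures.
From mathcomp Require Import all_boot all_order all_algebra.
From mathcomp Require Import reals.
From mathcomp Require Import ring lra.
Set Implicit Arguments. Unset Strict Implicit. Unset Printing Implicit Defensive.
Import Order.TTheory GRing.Theory Num.Theory.
Local Open Scope ring_scope.

Section Core.
Variable R : realFieldType.

Definition VM (m : nat) (x : 'I_m -> R) : 'M[R]_m := \matrix_(i, j) x i ^+ j.

Lemma VM_pos m (x : 'I_m -> R) :
  (forall i j : 'I_m, (i < j)%N -> x i < x j) -> 0 < \det (VM x).
Proof.
move=> H; rewrite -det_tr.
have -> : (VM x)^T = Vandermonde m (\row_j x j) by apply/matrixP => i j; rewrite !mxE.
rewrite det_Vandermonde; apply: prodr_gt0 => i _; apply: prodr_gt0 => j ij.
by rewrite !mxE subr_gt0; apply: H.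
Qed.

Definition Vk m (x : 'I_m.+1 -> R) (k : 'I_m.+1) := \det (VM (fun i => x (lift k i))).
Definition ck m (x : 'I_m.+1 -> R) (k : 'I_m.+1) := (-1) ^+ (k + m) * Vk x k.

Lemma lap m (x g : 'I_m.+1 -> R) :
  \det (\matrix_(k, l) if l == ord_max then g k else x k ^+ l) =
  \sum_k g k * ck x k.
Proof.
rewrite (expand_det_col _ ord_max); apply: eq_bigr => k _.
rewrite mxE eqxx /cofactor /ck /Vk; congr (_ * (_ * _)).
congr (\det _); apply/matrixP => i j; rewrite !mxE.
by rewrite lift_eqF lift_max.
Qed.

Lemma lap0 m (x : 'I_m.+1 -> R) l : (l < m)%N -> \sum_k x k ^+ l * ck x k = 0.
Proof.
move=> lm; rewrite -(lap x (fun k => x k ^+ l)) -det_tr.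
have hl : (l < m.+1)%N by apply: ltnW.
have hne : (inord l == ord_max :> 'I_m.+1) = false.
  by apply/negbTE; rewrite -val_eqE /= inordK // neq_ltn lm.
apply: (@determinant_alternate _ _ _ ord_max (inord l)).
  by rewrite eq_sym hne.
move=> k; rewrite !mxE eqxx hne.
by rewrite inordK.
Qed.
Lemma lapW m (x : 'I_m.+1 -> R) : \sum_k x k ^+ m * ck x k = \det (VM x).
Proof.
rewrite -(lap x (fun k => x k ^+ m)); congr (\det _); apply/matrixP => i j.
rewrite !mxE; case: eqP => [-> //|//].
Qed.
End Core.

Definition ltO n : rel 'I_n := fun a b => (a < b)%N.
Lemma ltO_tr n : transitive (@ltO n).
Proof. by move=> a b c; rewrite /ltO; apply: ltn_trans. Qed.
Lemma ltO_irr n : irreflexive (@ltO n).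
Proof. by move=> a; rewrite /ltO ltnn. Qed.

Lemma sorted_enum_set n (A : {set 'I_n}) : sorted (@ltO n) (enum A).
Proof.
have -> : enum A = filter (mem A) (enum 'I_n) by rewrite enumT.
apply: sorted_filter; first exact: ltO_tr.
have : sorted ltn (map val (enum 'I_n)) by rewrite val_enum_ord iota_ltn_sorted.
by rewrite sorted_map.
Qed.

Lemma sorted_map_ord m T (r : rel T) (g : 'I_m -> T) :
  (forall i j : 'I_m, (i < j)%N -> r (g i) (g j)) -> sorted r (map g (enum 'I_m)).
Proof.
move=> H; rewrite sorted_map.
have : sorted ltn (map val (enum 'I_m)) by rewrite val_enum_ord iota_ltn_sorted.
rewrite sorted_map; apply: sub_sorted => i j /=; exact: H.
Qed.

Section Sets.
Variable R : realType.
Variables d n : nat.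
Variable C : {set 'I_n}.
Hypothesis HC : #|C| = d.+2.

Definition fC (k : 'I_d.+2) : 'I_n := enum_val (cast_ord (esym HC) k).
Definition xC (k : 'I_d.+2) : R := ((fC k).+1)%:R.

Lemma fC_in k : fC k \in C.
Proof. exact: enum_valP. Qed.

Lemma fC_inj : injective fC.
Proof. by move=> i j /enum_val_inj /(congr1 val) /= /val_inj. Qed.

Lemma fC_mono (i j : 'I_d.+2) : (i < j)%N -> (fC i < fC j)%N.
Proof.
move=> ij; rewrite /fC !(enum_val_nth (fC i)).
have := @sorted_ltn_nth _ _ (@ltO_tr n) (fC i) _ (sorted_enum_set C).
apply => //=; rewrite inE -cardE HC //.
Qed.

Lemma fC_onto c : c \in C -> exists k, c = fC k.
Proof.
move=> cC; exists (cast_ord HC (enum_rank_in cC c)).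
by rewrite /fC cast_ordK enum_rankK_in.
Qed.

Lemma xC_mono (i j : 'I_d.+2) : (i < j)%N -> xC i < xC j.
Proof. by move=> ij; rewrite /xC ltr_nat ltnS fC_mono. Qed.

Lemma setD1_fC k i : (i \in C :\ fC k) <-> exists j, i = fC (lift k j).
Proof.
split.
  rewrite !inE => /andP[ik iC]; have [k' ek'] := fC_onto iC; subst i.
  case: (unliftP k k') => [j ->| ek]; first by exists j.
  by rewrite ek eqxx in ik.
move=> [j ->]; rewrite !inE fC_in andbT.
by apply/negP => /eqP /fC_inj /eqP; rewrite lift_eqF.
Qed.

Lemma enum_setD1_fC k :
  enum (C :\ fC k) = map (fun j => fC (lift k j)) (enum 'I_d.+1).
Proof.
apply: (irr_sorted_eq (@ltO_tr n) (@ltO_irr n)).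
- exact: sorted_enum_set.
- apply: sorted_map_ord => i j ij; rewrite /ltO; apply: fC_mono.
  by rewrite /= ltnNge leq_bump2 -ltnNge.
- move=> i; rewrite mem_enum; apply/idP/idP.
    by move/setD1_fC => [j ->]; apply/mapP; exists j; rewrite ?mem_enum.
  by move/mapP => [j _ ->]; apply/setD1_fC; exists j.
Qed.

Lemma lift_mono m (k : 'I_m.+1) (i j : 'I_m) : (i < j)%N -> (lift k i < lift k j)%N.
Proof. by move=> ij; rewrite /= ltnNge leq_bump2 -ltnNge. Qed.

Lemma Vk_pos k : 0 < Vk xC k.
Proof. by apply: VM_pos => i j ij; apply: xC_mono; apply: lift_mono. Qed.

Lemma W_pos : 0 < \det (VM xC).
Proof. by apply: VM_pos => i j ij; apply: xC_mono. Qed.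

Lemma nvol_fC k : nvol R d (C :\ fC k) = Vk xC k.
Proof.
rewrite /nvol enum_setD1_fC -map_comp.
set M := \matrix_(_, _) _.
have -> : M = VM (fun i => xC (lift k i)).
  apply/matrixP => i l; rewrite !mxE (nth_map i) ?size_enum_ord // nth_ord_enum /=.
  case: unliftP => [l' ->|->] /=; last by rewrite expr0.
  by rewrite /pt /mu mxE.
by rewrite ger0_norm // ltW // Vk_pos.
Qed.

Lemma key_id (w : 'rV[R]_d.+1) (b : R) :
  \sum_k ck xC k * (dotr w (lpt R d (fC k)) - b) = w 0 ord_max * \det (VM xC).
Proof.
rewrite (eq_bigr (fun k => \sum_j w 0 j * (xC k ^+ j.+1 * ck xC k)
                           - b * (xC k ^+ 0 * ck xC k))); last first.
  move=> k _; rewrite /dotr mulrBr mulr_sumr expr0 mul1r mulrC; congr (_ - _).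
    apply: eq_bigr => j _; rewrite /lpt /mu mxE.
    by rewrite /xC mulrCA [ck _ _ * _]mulrC.
rewrite sumrB -mulr_sumr lap0 // mulr0 subr0 exchange_big /=.
rewrite big_ord_recr /= big1 ?add0r.
  by rewrite -mulr_sumr lapW.
by move=> j _; rewrite -mulr_sumr lap0 ?mulr0 //= ltnS.
Qed.

Lemma sum_single (h : 'I_d.+2 -> R) k :
  (forall k', k' != k -> h k' = 0) -> \sum_k' ck xC k' * h k' = ck xC k * h k.
Proof.
move=> H; rewrite (bigD1 k) //= big1 ?addr0 // => k' /H ->; exact: mulr0.
Qed.

Definition lowk (k : 'I_d.+2) : bool := ~~ odd (k + d.+1).

Lemma ck_low k : ck xC k = (if lowk k then Vk xC k else - Vk xC k).
Proof.
rewrite /ck /lowk -signr_odd; case: (odd _) => /=; by rewrite ?expr0 ?expr1 ?mul1r ?mulN1r.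
Qed.

Lemma facet_sign k (w : 'rV[R]_d.+1) b :
  w 0 ord_max != 0 ->
  (forall j, dotr w (lpt R d (fC (lift k j))) = b) ->
  b < dotr w (lpt R d (fC k)) -> 0 < w 0 ord_max * ck xC k.
Proof.
move=> w0 Hj Hk.
have E := key_id w b.
rewrite (@sum_single (fun k' => dotr w (lpt R d (fC k')) - b) k) in E; last first.
  move=> k' nk; case: (unliftP k k') => [j ek|ek]; last by rewrite ek eqxx in nk.
  by rewrite ek Hj subrr.
have hk : 0 < dotr w (lpt R d (fC k)) - b by rewrite subr_gt0.
have : 0 < (w 0 ord_max * ck xC k) * (dotr w (lpt R d (fC k)) - b).
  by rewrite -mulrA E mulrA mulr_gt0 ?W_pos // lt_def sqrf_eq0 w0 sqr_ge0.
by rewrite pmulr_lgt0.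
Qed.

Lemma facet_exists (sg : R) k : 0 < sg * ck xC k ->
  exists (w : 'rV[R]_d.+1) b, [/\ w 0 ord_max = sg,
    forall j, dotr w (lpt R d (fC (lift k j))) = b &
    b < dotr w (lpt R d (fC k))].
Proof.
move=> Hs.
pose rs := map (fun j => xC (lift k j)) (enum 'I_d.+1).
pose Q := \prod_(a <- rs) ('X - a%:P).
pose p := sg *: Q.
have szQ : size Q = d.+2 by rewrite size_prod_XsubC size_map size_enum_ord.
have szp : (size p <= d.+2)%N by rewrite -szQ size_scale_leq.
pose w : 'rV[R]_d.+1 := \row_j p`_j.+1.
pose b := - p`_0.
have Hev : forall t : 'I_n, dotr w (lpt R d t) - b = p.[(t.+1)%:R].
  move=> t; rewrite (horner_coef_wide _ szp) big_ord_recl /dotr /b opprK expr0 mulr1 addrC.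
  congr (_ + _); apply: eq_bigr => j _; rewrite /lpt /mu !mxE; by [].
have Hroot : forall j, p.[xC (lift k j)] = 0.
  move=> j; rewrite hornerZ; apply/eqP; rewrite mulf_eq0; apply/orP; right.
  by rewrite -/(root Q _) root_prod_XsubC; apply/mapP; exists j; rewrite ?mem_enum.
have wmax : w 0 ord_max = sg.
  rewrite mxE coefZ /=.
  have : Q`_d.+1 = 1.
    have /monicP <- : Q \is monic by apply: monic_prod_XsubC.
    by rewrite lead_coefE szQ.
  by move=> ->; rewrite mulr1.
exists w, b; split => //.
  by move=> j; apply/eqP; rewrite -subr_eq0 Hev; apply/eqP; exact: Hroot.
have E := key_id w b.
rewrite (@sum_single (fun k' => dotr w (lpt R d (fC k')) - b) k) in E; last first.
  move=> k' nk; case: (unliftP k k') => [j ek|ek]; last by rewrite ek eqxx in nk.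
  by rewrite ek Hev Hroot.
rewrite -subr_gt0.
have : 0 < (sg * ck xC k) * (dotr w (lpt R d (fC k)) - b).
  rewrite -mulrA E wmax mulrA mulr_gt0 ?W_pos // lt_def sqrf_eq0 sqr_ge0 andbT.
  by apply: contraTneq Hs => ->; rewrite mul0r ltxx.
by rewrite pmulr_rgt0.
Qed.

Lemma card_setD1_fC k : #|C :\ fC k| = d.+1.
Proof. by have := cardsD1 (fC k) C; rewrite fC_in HC add1n => -[]. Qed.

Lemma sub_card (s : {set 'I_n}) : s \subset C -> #|s| = d.+1 -> exists k, s = C :\ fC k.
Proof.
move=> sC cs.
have [c cC cs'] : exists2 c, c \in C & c \notin s.
  case: (boolP (C \subset s)) => [/subset_leq_card|/subsetPn //].
  by rewrite HC cs ltnn.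
have [k ek] := fC_onto cC; exists k; subst c.
apply/eqP; rewrite eqEcard card_setD1_fC cs leqnn andbT.
apply/subsetP => i is_; rewrite !inE (subsetP sC) // andbT.
by apply: contraNneq cs' => <-.
Qed.

Lemma in_CD_fC k i : i \in C :\: (C :\ fC k) -> i = fC k.
Proof. rewrite !inE => /andP[]; case: eqP => //= _ H1 H2; by rewrite H2 in H1. Qed.

Lemma facet_char (sg : R) (s : {set 'I_n}) : sg != 0 -> s \subset C ->
  ([/\ s \subset C, #|s| = d.+1 &
     exists (w : 'rV[R]_d.+1) (b : R),
     [/\ 0 < sg * w 0 ord_max,
         forall i, i \in s -> dotr w (lpt R d i) = b &
         forall i, i \in C :\: s -> b < dotr w (lpt R d i)]]
  <-> exists2 k, s = C :\ fC k & 0 < sg * ck xC k).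
Proof.
move=> sg0 sC; split.
  case=> _ cs [w [b [wpos Hf Hc]]].
  have [k ek] := sub_card sC cs; subst s; exists k => //.
  have w0 : w 0 ord_max != 0 by apply: contraTneq wpos => ->; rewrite mulr0 ltxx.
  have := facet_sign w0 (fun j => Hf _ (proj2 (setD1_fC _ _) (ex_intro _ j erefl))) (Hc _ _).
  rewrite !inE eqxx fC_in /= => /(_ isT) H.
  have : 0 < (sg * w 0 ord_max) * (w 0 ord_max * ck xC k) by rewrite mulr_gt0.
  have -> : (sg * w 0 ord_max) * (w 0 ord_max * ck xC k) =
            (w 0 ord_max * w 0 ord_max) * (sg * ck xC k) by ring.
  by rewrite pmulr_rgt0 // lt_def mulf_neq0 // -expr2 sqr_ge0.
move=> [k -> Hk]; split; [exact: subD1set | exact: card_setD1_fC | ].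
have [w [b [wm Hj Hk']]] := facet_exists Hk.
exists w, b; split.
- by rewrite wm lt_def mulf_neq0 // -expr2 sqr_ge0.
- by move=> i /setD1_fC [j ->]; apply: Hj.
- by move=> i /in_CD_fC ->.
Qed.

Lemma lower_iff (s : {set 'I_n}) : s \subset C ->
  (lower_facet R d C s <-> exists2 k, s = C :\ fC k & lowk k).
Proof.
move=> sC; have [E1 E2] := @facet_char 1 s (oner_neq0 _) sC; split.
  case=> a c [w [b [p q r]]].
  have p' : 0 < 1 * w 0 ord_max by rewrite mul1r.
  have [k ek Hk] := E1 (And3 a c (ex_intro _ w (ex_intro _ b (And3 p' q r)))).
  exists k => //; rewrite mul1r ck_low in Hk; move: Hk; case: (lowk k) => //.
  by rewrite oppr_gt0 => /(lt_trans (Vk_pos k)); rewrite ltxx.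
move=> [k ek lk].
have H : 0 < 1 * ck xC k by rewrite mul1r ck_low lk Vk_pos.
have [a c [w [b [p q r]]]] := E2 (ex_intro2 _ _ k ek H).
split => //; exists w, b; split => //; by rewrite -(mul1r (w 0 ord_max)).
Qed.

Lemma upper_iff (s : {set 'I_n}) : s \subset C ->
  (upper_facet R d C s <-> exists2 k, s = C :\ fC k & ~~ lowk k).
Proof.
have sg0 : (-1 : R) != 0 by rewrite oppr_eq0 oner_neq0.
move=> sC; have [E1 E2] := @facet_char (-1) s sg0 sC; split.
  case=> a c [w [b [p q r]]].
  have p' : 0 < -1 * w 0 ord_max by rewrite mulN1r oppr_gt0.
  have [k ek Hk] := E1 (And3 a c (ex_intro _ w (ex_intro _ b (And3 p' q r)))).
  exists k => //; rewrite mulN1r ck_low in Hk; move: Hk; case: (lowk k) => //.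
  by rewrite oppr_gt0 => /(lt_trans (Vk_pos k)); rewrite ltxx.
move=> [k ek lk].
have H : 0 < -1 * ck xC k by rewrite mulN1r ck_low (negbTE lk) opprK Vk_pos.
have [a c [w [b [p q r]]]] := E2 (ex_intro2 _ _ k ek H).
split => //; exists w, b; split => //; by rewrite -oppr_gt0 -mulN1r.
Qed.

Lemma setD1_fC_inj : injective (fun k => C :\ fC k).
Proof.
move=> k k' /setP E; apply/eqP; apply/negPn/negP => nk.
have := E (fC k'); rewrite !inE eqxx fC_in /= andbT (inj_eq fC_inj) eq_sym.
by rewrite (negbTE nk).
Qed.

Lemma gkz_split (T : {set {set 'I_n}}) (P : pred 'I_d.+2) :
  (forall s : {set 'I_n}, s \subset C -> (s \in T <-> exists2 k, s = C :\ fC k & P k)) ->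
  gkz R d T (fC ord0) =
  \sum_(s : {set 'I_n} | (s \in T) && (fC ord0 \in s) && ~~ (s \subset C)) nvol R d s
  + \sum_(k | (k != ord0) && P k) Vk xC k.
Proof.
move=> HT; rewrite /gkz (bigID (fun s : {set 'I_n} => s \subset C)) /= addrC; congr (_ + _).
rewrite (eq_bigl (fun s => s \in [set C :\ fC k | k in [pred k | (k != ord0) && P k]])).
  rewrite big_imset /=; last by move=> k k' _ _; apply: setD1_fC_inj.
  by apply: eq_bigr => k _; rewrite nvol_fC.
move=> s; apply/idP/imsetP.
  case/andP=> /andP[sT ms] sC; have [k ek Pk] := (HT s sC).1 sT.
  exists k => //; rewrite inE Pk andbT; apply: contraNneq (negbT (negbF ms)) => k0.
  by rewrite ek k0 !inE eqxx.
move=> [k]; rewrite inE => /andP[k0 Pk] ->.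
have sC : C :\ fC k \subset C by apply: subD1set.
rewrite sC andbT ((HT _ sC).2 (ex_intro2 _ _ k erefl Pk)) /= !inE fC_in andbT.
by rewrite (inj_eq fC_inj) eq_sym.
Qed.

Lemma sum_ck0 : \sum_k ck xC k = 0.
Proof. have := @lap0 R d.+1 xC 0 (ltn0Sn d). by under eq_bigr do rewrite expr0 mul1r. Qed.

Lemma flip_lex (D D' : {set {set 'I_n}}) :
  (forall s : {set 'I_n}, s \subset C -> (s \in D <-> lower_facet R d C s)) ->
  (forall s : {set 'I_n}, s \subset C -> (s \in D' <-> upper_facet R d C s)) ->
  (forall s : {set 'I_n}, ~~ (s \subset C) -> (s \in D) = (s \in D')) ->
  if odd d then lexlt (gkz R d D) (gkz R d D') else lexlt (gkz R d D') (gkz R d D).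
Proof.
move=> HD HD' Hout.
have below : forall j : 'I_n, (j < fC ord0)%N -> gkz R d D j = gkz R d D' j.
  move=> j jm; rewrite /gkz; apply: eq_bigl => s.
  case js: (j \in s); rewrite ?andbF ?andbT //; apply: Hout.
  apply/negP => /subsetP /(_ j js) /fC_onto [k ek]; subst j.
  move: jm; case: (unliftP ord0 k) => [k' ->|->]; last by rewrite ltnn.
  have := @fC_mono ord0 (lift ord0 k') isT.
  by move=> h1 h2; have := ltn_trans h1 h2; rewrite ltnn.
have E1 := @gkz_split D lowk (fun s sC => iff_trans (HD s sC) (lower_iff sC)).
have E2 := @gkz_split D' (fun k => ~~ lowk k) (fun s sC => iff_trans (HD' s sC) (upper_iff sC)).
have EA : \sum_(s : {set 'I_n} | (s \in D) && (fC ord0 \in s) && ~~ (s \subset C)) nvol R d s =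
          \sum_(s : {set 'I_n} | (s \in D') && (fC ord0 \in s) && ~~ (s \subset C)) nvol R d s.
  apply: eq_bigl => s; case sC: (s \subset C); rewrite ?andbF //= Hout ?sC //.
have Ediff : gkz R d D (fC ord0) - gkz R d D' (fC ord0) = (-1) ^+ d * Vk xC ord0.
  rewrite E1 E2 EA opprD addrACA subrr add0r.
  have H0 : \sum_(k | (k != ord0) && lowk k) Vk xC k
            - \sum_(k | (k != ord0) && ~~ lowk k) Vk xC k = - ck xC ord0.
    rewrite -sumrN.
    have -> : \sum_(k | (k != ord0) && lowk k) Vk xC k =
              \sum_(k | (k != ord0) && lowk k) ck xC k.
      by apply: eq_bigr => k /andP[_ lk]; rewrite ck_low lk.
    have -> : \sum_(k | (k != ord0) && ~~ lowk k) - Vk xC k =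
              \sum_(k | (k != ord0) && ~~ lowk k) ck xC k.
      by apply: eq_bigr => k /andP[_ /negbTE lk]; rewrite ck_low lk.
    rewrite -bigID.
    have H := sum_ck0; rewrite (bigD1 ord0) //= in H.
    by apply/eqP; rewrite -addr_eq0 addrC H.
  by rewrite H0 /ck /= add0n exprS mulN1r mulNr opprK.
have V0 := Vk_pos ord0.
case: (boolP (odd d)) => od /=; [exists (fC ord0) | exists (fC ord0)]; split.
- by move=> j /below.
- rewrite -subr_lt0 Ediff -signr_odd od expr1 mulN1r oppr_lt0 //.
- by move=> j /below ->.
- by rewrite -subr_gt0 Ediff -signr_odd (negbTE od) expr0 mul1r.
Qed.

Lemma aff_dep_S : aff_dep R d C.
Proof.
pose lam (i : 'I_n) := \sum_k (if i == fC k then ck xC k else 0).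
have Hsum : forall g : 'I_n -> R, \sum_i lam i * g i = \sum_k ck xC k * g (fC k).
  move=> g; under eq_bigr do rewrite mulr_suml; rewrite exchange_big; apply: eq_bigr => k _.
  rewrite (bigD1 (fC k)) //= eqxx big1 ?addr0 // => i /negbTE ->; by rewrite mul0r.
exists lam; split.
- move=> i iC; apply: big1 => k _; case: eqP => // ei.
  by move: iC; rewrite ei fC_in.
- transitivity (\sum_i lam i * 1); first by apply: eq_bigr => i _; rewrite mulr1.
  rewrite Hsum -[RHS]sum_ck0; apply: eq_bigr => k _; exact: mulr1.
- apply/rowP => j; rewrite summxE !mxE.
  under eq_bigr do rewrite !mxE.
  rewrite (Hsum (fun i => (i.+1)%:R ^+ j.+1)).
  have hj : (j.+1 < d.+1)%N by rewrite ltnS.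
  apply: (etrans _ (@lap0 R d.+1 xC j.+1 hj)).
  by apply: eq_bigr => k _; rewrite mulrC.
- exists (fC ord0); rewrite /lam (bigD1 ord0) //= eqxx big1 ?addr0.
    by rewrite ck_low; case: (lowk _); rewrite ?oppr_eq0 lt0r_neq0 // Vk_pos.
  by move=> k nk; rewrite (inj_eq fC_inj) eq_sym (negbTE nk).
Qed.

End Sets.

Lemma aff_dep_card (R : realType) d n (S : {set 'I_n}) :
  aff_dep R d S -> (d.+2 <= #|S|)%N.
Proof.
case=> lam [H0 Hs Hv [i0 ni0]]; rewrite leqNgt; apply/negP => cs.
pose y (i : 'I_n) : R := (i.+1)%:R.
have Hpow : forall l, (l <= d)%N -> \sum_i lam i * y i ^+ l = 0.
  case=> [_|j jd]; first by rewrite -[RHS]Hs; apply: eq_bigr => i _; rewrite expr0 mulr1.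
  have := congr1 (fun M : 'rV[R]_d => M 0 (Ordinal jd)) Hv.
  rewrite /= summxE mxE => H; rewrite -[RHS]H.
  by apply: eq_bigr => i _; rewrite /pt /mu !mxE.
have Hpoly : forall q : {poly R}, (size q <= d.+1)%N -> \sum_i lam i * q.[y i] = 0.
  move=> q sq; under eq_bigr do rewrite (horner_coef_wide _ sq) mulr_sumr.
  rewrite exchange_big big1 //= => l _.
  have -> : \sum_i lam i * (q`_l * y i ^+ l) = q`_l * \sum_i lam i * y i ^+ l.
    by rewrite mulr_sumr; apply: eq_bigr => i _; rewrite mulrCA.
  by rewrite Hpow ?mulr0 // -ltnS.
have i0S : i0 \in S by apply: contraNT ni0 => /H0 ->.
pose rs := map y (enum (S :\ i0)).
pose q := \prod_(z <- rs) ('X - z%:P).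
have sq : (size q <= d.+1)%N.
  rewrite size_prod_XsubC size_map -cardE.
  by move: cs; rewrite (cardsD1 i0) i0S add1n ltnS.
have yinj : injective y by move=> a b /eqP; rewrite /y eqr_nat eqSS => /eqP /val_inj.
have := Hpoly q sq; rewrite (bigD1 i0) //= big1 ?addr0.
  apply/eqP; rewrite mulf_neq0 //; rewrite -/(root q _) root_prod_XsubC.
  by apply/mapP => -[j]; rewrite mem_enum !inE => /andP[ji _] /yinj ej; rewrite ej eqxx in ji.
move=> i ni; case: (boolP (i \in S)) => iS; last by rewrite H0 // mul0r.
apply/eqP; rewrite mulf_eq0; apply/orP; right.
by rewrite -/(root q _) root_prod_XsubC; apply/mapP; exists i; rewrite // mem_enum !inE ni.
Qed.


Lemma circuit_card (R : realType) d n (C : {set 'I_n}) :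
  circuit R d C -> #|C| = d.+2.
Proof.
case=> dep minC; have cge := aff_dep_card dep.
apply/eqP; rewrite eqn_leq cge andbT leqNgt; apply/negP => clt.
pose S := [set x in take d.+2 (enum C)].
have cS : #|S| = d.+2.
  have u : uniq (take d.+2 (enum C)) by apply: take_uniq; exact: enum_uniq.
  by rewrite cardsE (card_uniqP u) size_takel // -cardE ltnW.
apply: (minC S).
  rewrite properEcard cS clt andbT; apply/subsetP => x; rewrite inE.
  by move/mem_take; rewrite mem_enum.
exact: (aff_dep_S R cS).
Qed.

Lemma lex_antisym n (R : realType) (a b : 'I_n -> R) : lexlt a b -> lexlt b a -> False.
Proof.
case=> i [Hi ai] [j [Hj bj]]; case: (ltngtP i j) => [ij|ji|e].
- by move: ai; rewrite (Hj i ij) ltxx.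
- by move: bj; rewrite (Hi j ji) ltxx.
- have e' : i = j by apply: val_inj.
  by subst j; have := lt_trans ai bj; rewrite ltxx.
Qed.

Lemma flip_main (R : realType) d n (D D' : {set {set 'I_n}}) :
  up_flip R d D D' ->
  if odd d then lexlt (gkz R d D) (gkz R d D') else lexlt (gkz R d D') (gkz R d D).
Proof.
case=> C [circ HD HD' Hout].
exact: (flip_lex (circuit_card circ) HD HD' Hout).
Qed.

Unset Implicit Arguments.
Local Close Scope ring_scope.

Theorem proposition1 (R : realType) (d n : nat) (hd : (1 <= d)%N) (hn : (d < n)%N)
  (D D' : {set {set 'I_n}}) :
  triangulation R d D -> triangulation R d D' -> differ_by_flip R d D D' ->
  (up_flip R d D D' <->
   (if odd d then lexlt (gkz R d D) (gkz R d D')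
    else lexlt (gkz R d D') (gkz R d D))).
Proof.
move=> _ _ Hf; split; first exact: flip_main.
move=> Hl; case: Hf => // up'; have := flip_main up'.
by case: (odd d) Hl => Hl H; case: (lex_antisym Hl H).
Qed.
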